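(* Let $N \ge 1$ and let $W_N$ be the set of binary words of length $N$. Define $\varphi_3 : W_N \to W_N$ by $\varphi_3(u) = v\, 0 11\, 0^{p-1} v'$ if $u = v 0^p 11 v'$ where $p \geq 2$, $v'$ is a (possibly empty) word, and $v$ is a (possibly empty) word which does not contain $0011$ as a contiguous subword and which is either empty or ends with the letter $1$; and $\varphi_3(u) = u$ otherwise. Then $|P(\varphi_3(u))| \leq |P(u)|$ for every $u \in W_N$.
   Context: For a binary word $x$, $x^j$ denotes $j$ concatenated copies of $x$, and juxtaposition denotes concatenation. For a binary word $w = w_1 \cdots w_\ell$ of length $\ell$, $P(w)$ is the set of indices $i \geq 2$ such that at least one of the following holds: (i) $\ell \geq i$ and $w_{i-1} w_i = 00$; (ii) $\ell \geq i+2$ and $w_{i-1} w_i w_{i+1} w_{i+2} = 0100$; (iii) $\ell \geq i+3$ and $w_{i-1} \cdots w_{i+3} = 01010$. *)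

(* Defs.v *)
(* Binary words are [seq bool] with false = 0, true = 1. *)
From mathcomp Require Import all_boot.
Set Implicit Arguments. Unset Strict Implicit. Unset Printing Implicit Defensive.

(* 1-based letter access: letter w i = w_i (for 1 <= i <= size w). *)
Definition letter (w : seq bool) (i : nat) : bool := nth false w i.-1.

Definition Pcond (w : seq bool) (i : nat) : bool :=
  let l := size w in
  [|| (i <= l) && (~~ letter w i.-1) && (~~ letter w i)
    , (i + 2 <= l) && [&& ~~ letter w i.-1, letter w i,
                          ~~ letter w i.+1 & ~~ letter w i.+2]
    | (i + 3 <= l) && [&& ~~ letter w i.-1, letter w i, ~~ letter w i.+1,
                          letter w i.+2 & ~~ letter w i.+3] ].

(* P(w) as the list of its elements; every element i satisfies 2 <= i <= size w,
   so we enumerate the candidates 2, ..., size w. *)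
Definition P (w : seq bool) : seq nat := [seq i <- iota 2 (size w).-1 | Pcond w i].

Definition zero := false.
Definition one := true.

Definition phi3_decomp (u v : seq bool) (p : nat) (v' : seq bool) : Prop :=
  [/\ u = v ++ nseq p zero ++ [:: one; one] ++ v',
      2 <= p,
      ~~ infix [:: zero; zero; one; one] v
    & v = [::] \/ last zero v = one].

Definition phi3_graph (u w : seq bool) : Prop :=
  (exists v p v', phi3_decomp u v p v' /\
                  w = v ++ [:: zero; one; one] ++ nseq p.-1 zero ++ v')
  \/ ((forall v p v', ~ phi3_decomp u v p v') /\ w = u).

(* Main.v *)
Require Import Defs.
From mathcomp Require Import all_boot zify.

Definition start (s : seq bool) : bool :=
  match s with
  | false :: false :: _ => true
  | false :: true :: false :: false :: _ => true
  | false :: true :: false :: true :: false :: _ => true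
  | _ => false
  end.

Fixpoint cnt (s : seq bool) : nat :=
  if s is x :: r then start s + cnt r else 0.

Fixpoint cntv (v m : seq bool) : nat :=
  if v is x :: r then start (v ++ m) + cntv r m else 0.

Lemma cnt_cat v m : cnt (v ++ m) = cntv v m + cnt m.
Proof. by elim: v => //= x v ->; rewrite addnA. Qed.

Lemma startE d : start d =
  [|| (2 <= size d) && (~~ nth false d 0) && (~~ nth false d 1)
    , (4 <= size d) && [&& ~~ nth false d 0, nth false d 1,
                          ~~ nth false d 2 & ~~ nth false d 3]
    | (5 <= size d) && [&& ~~ nth false d 0, nth false d 1, ~~ nth false d 2,
                          nth false d 3 & ~~ nth false d 4] ].
Proof.
case: d => [|[] [|[] [|[] [|[] [|[] d]]]]] //=.
Qed.

Lemma cnt_count w : cnt w = count (fun j => start (drop j w)) (iota 0 (size w)).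
Proof.
elim: w => //= x w IH.
rewrite IH; congr (_ + _).
rewrite -(addn0 1) iotaDl count_map.
by apply: eq_count => j.
Qed.

Lemma drop_last (w : seq bool) n : size w = n.+1 -> drop n w = [:: last false w].
Proof.
elim: w n => [|x w IH] [|n] //=; first by move=> [] /size0nil ->.
by move=> [] H; rewrite (IH _ H); case: w H {IH}.
Qed.

Lemma sizeP w : size (P w) = cnt w.
Proof.
rewrite /P size_filter cnt_count.
case Hw: (size w) => [|n] //.
rewrite (_ : n.+1.-1 = n) // -[in RHS](addn1 n) iotaD count_cat add0n /= (drop_last _ _ Hw) /= addn0.
rewrite -(addn0 2) iotaDl count_map.
rewrite if_same addn0.
apply: eq_count => j /=.
rewrite /Pcond startE /letter size_drop /= !nth_drop Hw.
rewrite !(addnC j) !addSn !add0n.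
have -> : (1 < n.+1 - j) = (j.+2 <= n.+1) by lia.
have -> : (3 < n.+1 - j) = (j.+2 + 2 <= n.+1) by lia.
have -> : (4 < n.+1 - j) = (j.+2 + 3 <= n.+1) by lia.
by [].
Qed.

Lemma start_le s t t' : s != [::] -> last false s ->
  start (s ++ [:: false, true, true & t]) <= start (s ++ [:: false, false & t']).
Proof. by case: s => [|[] [|[] [|[] [|[] [|[] r]]]]]. Qed.

Lemma cntv_le v t t' : (v = [::] \/ last false v) ->
  cntv v [:: false, true, true & t] <= cntv v [:: false, false & t'].
Proof.
elim: v => [|x s IH] // H.
rewrite /=; apply: leq_add.
  apply: (start_le (x :: s)) => //; by case: H.
apply: IH; case: s H => [|y s]; first by left.
by case=> //= ->; right.
Qed.

Lemma cnt_zeros q v' : cnt (nseq q.+1 false ++ [:: true, true & v']) = q + cnt v'.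
Proof.
elim: q => [|q IH] //.
change (start (false :: nseq q.+1 false ++ [:: true, true & v']) + cnt (nseq q.+1 false ++ [:: true, true & v']) = q.+1 + cnt v').
by rewrite IH /= add1n addSn.
Qed.

Lemma cnt_le_nseq n v' : cnt (nseq n false ++ v') <= n + cnt v'.
Proof.
elim: n => [|n IH] //=.
rewrite -add1n -addnA leq_add //. by case: (_ ++ _) => [|[] [|[] [|[] [|[] ?]]]].
Qed.

Theorem lemma4p3 (N : nat) (u w : seq bool) :
  1 <= N -> size u = N -> phi3_graph u w -> size (P w) <= size (P u).
Proof.
move=> _ _ [[v [p [v' [[Hu Hp _ Hv] ->]]]]|[_ ->]] //.
rewrite !sizeP Hu.
case: p Hp Hu => [|[|q]] // _ _.
rewrite cnt_cat [cnt (v ++ _)]cnt_cat; apply: leq_add; first exact: cntv_le.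
change (cnt (nseq q.+1 false ++ v') <= cnt (nseq q.+2 false ++ [:: true, true & v'])).
by rewrite cnt_zeros cnt_le_nseq.
Qed.
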